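(* The function $\check J$ is coercive on $\mathcal M_T$: $\check J(\Sigma_{\rho_0},\dots,\Sigma_{\rho_{T-1}})\to\infty$ as $\|\Sigma_{\rho_k}\|\to\infty$ for any $k\in\{0,\dots,T-1\}$.
   Context: Fix integers $n,m,T\ge 1$, a scalar $\varepsilon>0$, matrices $A_k\in\mathbb R^{n\times n}$, $B_k\in\mathbb R^{n\times m}$ ($k=0,\dots,T-1$), and symmetric positive definite matrices $R_k\in\mathbb R^{m\times m}$, $\Sigma_{w_k}\in\mathbb R^{n\times n}$ ($k=0,\dots,T-1$), $F,\Sigma_{x_{\mathrm{ini}}}\in\mathbb R^{n\times n}$. Let $\mathcal M_T=(\mathbb S^m_{\succeq 0})^T$ with $\mathbb S^m_{\succeq0}$ the symmetric PSD $m\times m$ matrices; $\|\cdot\|$ the Frobenius norm; $\Sigma^{1/2}$ the PSD square root, $|\cdot|$ the determinant. For $(\Sigma_{\rho_0},\dots,\Sigma_{\rho_{T-1}})\in\mathcal M_T$ define backwards $\Pi_T=F$, $C_k=(R_k+B_k^\top\Pi_{k+1}B_k)/\varepsilon$, $\Pi_k=A_k^\top\Pi_{k+1}A_k-\frac1\varepsilon A_k^\top\Pi_{k+1}B_k\Sigma_{\rho_k}^{1/2}(I+\Sigma_{\rho_k}^{1/2}C_k\Sigma_{\rho_k}^{1/2})^{-1}\Sigma_{\rho_k}^{1/2}B_k^\top\Pi_{k+1}A_k$, $\Sigma_{Q_k}=\varepsilon(R_k+B_k^\top\Pi_{k+1}B_k)^{-1}$, and $\check J(\Sigma_{\rho_0},\dots,\Sigma_{\rho_{T-1}})=\frac12\Big[\mathrm{Tr}(\Pi_0\Sigma_{x_{\mathrm{ini}}})+\sum_{k=0}^{T-1}\Big(\varepsilon\log\frac{|\Sigma_{\rho_k}+\Sigma_{Q_k}|}{|\Sigma_{Q_k}|}+\mathrm{Tr}(\Pi_{k+1}\Sigma_{w_k})\Big)\Big]$.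 *)

(* Defs.v *)
From HB Require Import structures.
From mathcomp Require Import all_boot all_order all_algebra.
From mathcomp Require Import boolp classical_sets reals exp.
Set Implicit Arguments. Unset Strict Implicit. Unset Printing Implicit Defensive.
Import Order.TTheory GRing.Theory Num.Theory.
Local Open Scope ring_scope.

Section Defs.
Variable R : realType.

Definition psd (k : nat) (M : 'M[R]_k) : Prop :=
  M^T = M /\ forall x : 'cV[R]_k, 0 <= (x^T *m M *m x) 0 0.
Definition pd (k : nat) (M : 'M[R]_k) : Prop :=
  M^T = M /\ forall x : 'cV[R]_k, x != 0 -> 0 < (x^T *m M *m x) 0 0.

(* PSD square root: the (unique) PSD S with S *m S = M (chosen classically;
   0 if none exists, which never happens for PSD M). *)
Definition sqrtm (k : nat) (M : 'M[R]_k) : 'M[R]_k :=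
  xget 0 [set S | psd S /\ S *m S = M].

Definition frob (p q : nat) (M : 'M[R]_(p, q)) : R :=
  Num.sqrt (\sum_(i < p) \sum_(j < q) M i j ^+ 2).

Variables (n m T : nat) (eps : R).
Variables (A : nat -> 'M[R]_n) (B : nat -> 'M[R]_(n, m)) (Rk : nat -> 'M[R]_m)
          (Sw : nat -> 'M[R]_n) (F Sx : 'M[R]_n).
Variable Sig : nat -> 'M[R]_m.

Definition Cmat (k : nat) (Pn : 'M[R]_n) : 'M[R]_m :=
  eps^-1 *: (Rk k + (B k)^T *m Pn *m B k).

Definition Pi_step (k : nat) (Pn : 'M[R]_n) : 'M[R]_n :=
  let S := sqrtm (Sig k) in
  (A k)^T *m Pn *m A k
  - eps^-1 *: ((A k)^T *m Pn *m B k *m S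
               *m invmx (1%:M + S *m Cmat k Pn *m S)
               *m S *m (B k)^T *m Pn *m A k).

(* Pi_rev d = Pi_{T-d} *)
Fixpoint Pi_rev (d : nat) : 'M[R]_n :=
  match d with
  | 0 => F
  | d'.+1 => Pi_step (T - d'.+1) (Pi_rev d')
  end.

Definition Pi (k : nat) : 'M[R]_n := Pi_rev (T - k).

Definition SigQ (k : nat) : 'M[R]_m :=
  eps *: invmx (Rk k + (B k)^T *m Pi k.+1 *m B k).

Definition Jcheck : R :=
  2^-1 * (\tr (Pi 0 *m Sx)
          + \sum_(k < T) (eps * ln (\det (Sig k + SigQ k) / \det (SigQ k))
                          + \tr (Pi k.+1 *m Sw k))).
End Defs.

(* Main.v *)
Require Import Defs.
From HB Require Import structures.
From mathcomp Require Import all_boot all_order all_algebra ring lra.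
From mathcomp Require Import boolp classical_sets reals exp sequences.
Set Implicit Arguments. Unset Strict Implicit. Unset Printing Implicit Defensive.
Import Order.TTheory GRing.Theory Num.Theory.
Local Open Scope ring_scope.

Section Lin.
Variable R : realType.

Definition qf (p : nat) (Q : 'M[R]_p) (x y : 'cV[R]_p) : R := (x^T *m Q *m y) 0 0.

Lemma qfDl p (Q : 'M[R]_p) x1 x2 y : qf Q (x1 + x2) y = qf Q x1 y + qf Q x2 y.
Proof. by rewrite /qf linearD /= !mulmxDl mxE. Qed.
Lemma qfDr p (Q : 'M[R]_p) x y1 y2 : qf Q x (y1 + y2) = qf Q x y1 + qf Q x y2.
Proof. by rewrite /qf !mulmxDr mxE. Qed.
Lemma qfZl p (Q : 'M[R]_p) a x y : qf Q (a *: x) y = a * qf Q x y.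
Proof. by rewrite /qf linearZ /= -!scalemxAl mxE. Qed.
Lemma qfZr p (Q : 'M[R]_p) a x y : qf Q x (a *: y) = a * qf Q x y.
Proof. by rewrite /qf -scalemxAr mxE. Qed.
Lemma qfNl p (Q : 'M[R]_p) x y : qf Q (- x) y = - qf Q x y.
Proof. by rewrite -scaleN1r qfZl mulN1r. Qed.
Lemma qfNr p (Q : 'M[R]_p) x y : qf Q x (- y) = - qf Q x y.
Proof. by rewrite -scaleN1r qfZr mulN1r. Qed.
Lemma qfBl p (Q : 'M[R]_p) x1 x2 y : qf Q (x1 - x2) y = qf Q x1 y - qf Q x2 y.
Proof. by rewrite qfDl qfNl. Qed.
Lemma qfBr p (Q : 'M[R]_p) x y1 y2 : qf Q x (y1 - y2) = qf Q x y1 - qf Q x y2.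
Proof. by rewrite qfDr qfNr. Qed.
Lemma qfQD p (Q1 Q2 : 'M[R]_p) x y : qf (Q1 + Q2) x y = qf Q1 x y + qf Q2 x y.
Proof. by rewrite /qf mulmxDr mulmxDl mxE. Qed.
Lemma qfQN p (Q : 'M[R]_p) x y : qf (- Q) x y = - qf Q x y.
Proof. by rewrite /qf mulmxN mulNmx mxE. Qed.
Lemma qfQB p (Q1 Q2 : 'M[R]_p) x y : qf (Q1 - Q2) x y = qf Q1 x y - qf Q2 x y.
Proof. by rewrite qfQD qfQN. Qed.
Lemma qfQZ p (Q : 'M[R]_p) a x y : qf (a *: Q) x y = a * qf Q x y.
Proof. by rewrite /qf -scalemxAr -scalemxAl mxE. Qed.
Lemma qf_sym p (Q : 'M[R]_p) x y : Q^T = Q -> qf Q x y = qf Q y x.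
Proof.
move=> sQ; rewrite /qf.
have -> : forall M : 'M[R]_1, M 0 0 = M^T 0 0 by move=> M; rewrite mxE.
by rewrite !trmx_mul !trmxK sQ mulmxA.
Qed.
Lemma qf_mul p q (A : 'M[R]_(q, p)) (Q : 'M[R]_q) x y :
  qf (A^T *m Q *m A) x y = qf Q (A *m x) (A *m y).
Proof. by rewrite /qf trmx_mul !mulmxA. Qed.
Lemma qf_mulA p (Q : 'M[R]_p) (x y : 'cV[R]_p) : qf Q x y = (x^T *m (Q *m y)) 0 0.
Proof. by rewrite /qf mulmxA. Qed.
Lemma qf1 p (x y : 'cV[R]_p) : qf 1%:M x y = \sum_i x i 0 * y i 0.
Proof. by rewrite /qf mulmx1 mxE; apply: eq_bigr => i _; rewrite mxE. Qed.

Lemma CS (p : nat) (a b : 'I_p -> R) :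
  (\sum_i a i * b i) ^+ 2 <= (\sum_i a i ^+ 2) * (\sum_i b i ^+ 2).
Proof.
set A := \sum_i a i ^+ 2; set B := \sum_i b i ^+ 2; set S := \sum_i a i * b i.
have A0 : 0 <= A by apply: sumr_ge0 => i _; exact: sqr_ge0.
have [A00|Apos] := eqVneq A 0.
  have a0 : forall i, a i = 0.
    move=> i; apply/eqP; rewrite -sqrf_eq0; apply/eqP.
    by move/eqP: A00; rewrite psumr_eq0 => [/allP/(_ i (mem_index_enum _))/implyP/(_ isT)/eqP|//] ; last by move=> j _; exact: sqr_ge0.
  have -> : S = 0 by rewrite /S big1 // => i _; rewrite a0 mul0r.
  by rewrite A00 mul0r expr0n.
have Ap : 0 < A by rewrite lt_def Apos.
have H : 0 <= \sum_i (A * b i - S * a i) ^+ 2 by apply: sumr_ge0 => i _; exact: sqr_ge0.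
have E : \sum_i (A * b i - S * a i) ^+ 2 = A * (A * B - S ^+ 2).
  transitivity (\sum_i (A^+2 * b i ^+ 2 - (2 * A * S) * (a i * b i) + S ^+ 2 * a i ^+ 2)).
    by apply: eq_bigr => i _; ring.
  rewrite !big_split /= -!mulr_sumr sumrN -mulr_sumr /A /B /S; ring.
rewrite E in H; rewrite -subr_ge0; by rewrite pmulr_rge0 in H.
Qed.

Lemma qf_block m (a : 'M[R]_1) (c : 'M[R]_(1, m)) (b : 'M[R]_(m, 1)) (D : 'M[R]_m) t y :
  qf (block_mx a c b D : 'M_(1 + m)) (col_mx t y) (col_mx t y) =
  (t^T *m a *m t) 0 0 + (t^T *m c *m y) 0 0 + (y^T *m b *m t) 0 0 + qf D y y.
Proof.
rewrite /qf tr_col_mx mul_row_block mul_row_col !mulmxDl !mxE.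
by rewrite !(mxE, big_ord1) addrA; congr (_ + _); rewrite -!addrA; congr (_ + _); rewrite addrC.
Qed.

Lemma m11E (X : 'M[R]_1) (Y : 'M[R]_1) : (X *m Y) 0 0 = X 0 0 * Y 0 0.
Proof. by rewrite mxE big_ord1. Qed.

End Lin.


Section Gram.
Variable R : realType.

Lemma psd_qf p (M : 'M[R]_p) x : psd M -> 0 <= qf M x x.
Proof. by case=> _ /(_ x). Qed.

Lemma blockP m (M : 'M[R]_(1 + m)) : psd M ->
  let a := M 0 0 in let b := dlsubmx M in let D := drsubmx M in
  [/\ ursubmx M = b^T, ulsubmx M = a%:M, D^T = D &
      forall tau y, 0 <= a * tau ^+ 2 + 2 * tau * (b^T *m y) 0 0 + qf D y y].
Proof.
move=> [sM pM] a b D.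
have E := submxK M.
have sM' : block_mx (ulsubmx M) (ursubmx M) b D = (block_mx (ulsubmx M) (ursubmx M) b D)^T by rewrite E sM.
rewrite tr_block_mx in sM'.
have [_ h2 _ h4] := eq_block_mx sM'.
have ha : ulsubmx M = a%:M.
  rewrite [LHS]mx11_scalar; congr (_%:M).
  by rewrite /a -[in RHS]E; rewrite [in RHS](_ : (0 : 'I_(1+m)) = lshift m 0) ?block_mxEul //; apply/val_inj.
split => //.
move=> tau y.
have H : 0 <= qf M (col_mx tau%:M y) (col_mx tau%:M y) := pM _.
rewrite -E qf_block ha h2 -/b -/D in H.
rewrite tr_scalar_mx !mul_scalar_mx -!scalemxAl !mul_mx_scalar !mxE eqxx !mulr1n in H.
have e : \sum_j y^T 0 j * b j 0 = (b^T *m y) 0 0.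
  by rewrite mxE; apply: eq_bigr => j _; rewrite !mxE mulrC.
have e2 : \sum_j b^T 0 j * y j 0 = (b^T *m y) 0 0 by rewrite mxE.
rewrite e e2 in H; move: H; congr (_ <= _); ring.
Qed.
End Gram.


Section Gram2.
Variable R : realType.

Lemma qf0l p (Q : 'M[R]_p) y : qf Q 0 y = 0.
Proof. by have := qfZl Q 0 0 y; rewrite scale0r mul0r. Qed.

Lemma block_eq m1 m2 n1 n2 (a1 a2 : 'M[R]_(m1, n1)) (b1 b2 : 'M[R]_(m1, n2))
  (c1 c2 : 'M[R]_(m2, n1)) (d1 d2 : 'M[R]_(m2, n2)) :
  a1 = a2 -> b1 = b2 -> c1 = c2 -> d1 = d2 ->
  block_mx a1 b1 c1 d1 = block_mx a2 b2 c2 d2.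
Proof. by move=> -> -> -> ->. Qed.

Lemma gram m (M : 'M[R]_m) : psd M -> exists L : 'M[R]_m, M = L^T *m L.
Proof.
elim: m M => [|m IH] M hM.
  by exists 0; apply/matrixP => -[].
change 'M[R]_(1 + m) in M.
have [hur hul hD hq] := blockP (M := M) hM.
set a := M 0 0 in hul hq *. set b := dlsubmx M in hur hq *. set D := drsubmx M in hD hq *.
have a0 : 0 <= a.
  have := hq 1 0; rewrite mulmx0 qf0l mxE; lra.
have hq0 : forall y, 0 <= qf D y y.
  by move=> y; have := hq 0 y; rewrite mxE; lra.
have hb : a = 0 -> b = 0.
  move=> a00; apply/matrixP => i j; rewrite (ord1 j) [RHS]mxE.
  pose y : 'cV[R]_m := delta_mx i 0.
  have hby : (b^T *m y) 0 0 = b i 0 by rewrite /y -colE !mxE.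
  have q0 := hq0 y.
  apply/eqP; apply: contraT => bn0.
  have := hq (-(qf D y y + 1) / (2 * b i 0)) y.
  rewrite a00 hby mul0r add0r.
  have -> : 2 * (-(qf D y y + 1) / (2 * b i 0)) * b i 0 = -(qf D y y + 1).
    by field.
  move=> h; have : (0:R) < 0 by lra.
  by rewrite ltxx.
pose S := D - a^-1 *: (b *m b^T).
have aa : a * a^-1 ^+ 2 = a^-1.
  case: (eqVneq a 0) => [->|an]; first by rewrite invr0 mul0r.
  by rewrite expr2 mulrA mulfV // mul1r.
have hS : psd S.
  split.
    by rewrite /S linearB /= linearZ /= trmx_mul trmxK hD.
  move=> y; change (0 <= qf S y y).
  have := hq (- a^-1 * (b^T *m y) 0 0) y.
  rewrite /S qfQB qfQZ.
  have -> : qf (b *m b^T) y y = (b^T *m y) 0 0 ^+ 2.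
    rewrite /qf mulmxA -mulmxA m11E expr2; congr (_ * _).
    by rewrite -[in LHS](trmxK b) -trmx_mul mxE.
  have e : a * (- a^-1 * (b^T *m y) 0 0) ^+ 2 = a^-1 * (b^T *m y) 0 0 ^+ 2.
    by rewrite exprMn sqrrN mulrA aa.
  rewrite e; set z := (b^T *m y) 0 0; set w := qf D y y.
  have -> : a^-1 * z ^+ 2 + 2 * (- a^-1 * z) * z + w = w - a^-1 * z ^+ 2 by ring.
  by [].
have [L' hL'] := IH S hS.
pose s := Num.sqrt a.
have ss : s * s = a by rewrite -expr2 sqr_sqrtr.
have sb : s * s^-1 *: b = b.
  case: (eqVneq a 0) => [/hb ->|an]; first by rewrite scaler0.
  rewrite mulfV ?scale1r //; apply: contra an => /eqP s0.
  by rewrite -ss s0 mul0r.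
exists (block_mx s%:M (s^-1 *: b^T) 0 L' : 'M_(1 + m)).
rewrite -[M]submxK hul hur -/b -/D (@tr_block_mx _ 1 m 1 m) (@mulmx_block _ 1 m 1 m 1 m).
apply: (@block_eq 1 m 1 m).
- by rewrite tr_scalar_mx mulmx0 addr0 mul_scalar_mx scale_scalar_mx ss.
- rewrite trmx0 mul0mx addr0 tr_scalar_mx mul_scalar_mx scalerA.
  by rewrite -{1}sb linearZ.
- by rewrite mulmx0 addr0 linearZ /= trmxK mul_mx_scalar scalerA sb.
- rewrite -hL' /S [(s^-1 *: b^T)^T]linearZ /= trmxK -scalemxAl -scalemxAr scalerA.
  rewrite -invfM ss; by rewrite addrC subrK.
Qed.
End Gram2.


Section Det.
Variable R : realType.

Lemma sylvester p q (X : 'M[R]_(p, q)) (Y : 'M[R]_(q, p)) :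
  \det (1%:M + X *m Y) = \det (1%:M + Y *m X).
Proof.
pose Z := block_mx 1%:M (- X) Y 1%:M : 'M[R]_(p + q).
have e1 : block_mx 1%:M 0 Y 1%:M *m block_mx 1%:M (- X) 0 (1%:M + Y *m X) = Z.
  rewrite mulmx_block !mul1mx !mulmx1 ?mul0mx ?mulmx0 ?addr0 ?add0r.
  by rewrite mulmxN addrCA addNr addr0.
have e2 : block_mx 1%:M (- X) 0 1%:M *m block_mx (1%:M + X *m Y) 0 Y 1%:M = Z.
  rewrite mulmx_block !mul1mx !mulmx1 ?mul0mx ?mulmx0 ?addr0 ?add0r.
  by rewrite mulNmx addrK.
have := congr1 determinant e1; rewrite -e2 !det_mulmx det_lblock det_ublock.
by rewrite !det_ublock det_lblock !det1 !mul1r !mulr1 => ->.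
Qed.

Lemma minor2 p (K : 'M[R]_p) i j : psd K -> K i j ^+ 2 <= K i i * K j j.
Proof.
move=> /gram [L ->]; rewrite !mxE.
have e : forall u v, \sum_k L^T u k * L k v = \sum_k L k u * L k v.
  by move=> u v; apply: eq_bigr => k _; rewrite mxE.
rewrite !e.
have := CS (fun k => L k i) (fun k => L k j).
by congr (_ <= _ * _); apply: eq_bigr => k _; rewrite expr2.
Qed.


Lemma qf_bbT p (b : 'cV[R]_p) y : qf (b *m b^T) y y = (b^T *m y) 0 0 ^+ 2.
Proof.
rewrite /qf mulmxA -mulmxA m11E expr2; congr (_ * _).
by rewrite -[in LHS](trmxK b) -trmx_mul mxE.
Qed.

Lemma det1D m (K : 'M[R]_m) : psd K -> 1 + \tr K <= \det (1%:M + K).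
Proof.
elim: m K => [|m IH] K hK.
  by rewrite det_mx00 /mxtrace big_ord0 addr0.
change 'M[R]_(1 + m) in K.
have [hur hul hD hq] := blockP hK.
set a := K 0 0 in hul hq *. set b := dlsubmx K in hur hq *. set D := drsubmx K in hD hq *.
have a0 : 0 <= a.
  have := hq 1 0; rewrite mulmx0 qf0l mxE; lra.
pose c := 1 + a.
have c0 : 0 < c by rewrite /c; lra.
have cn0 : c != 0 by rewrite gt_eqF.
pose K2 := D - c^-1 *: (b *m b^T).
have hK2 : psd K2.
  split.
    by rewrite /K2 linearB /= linearZ /= trmx_mul trmxK hD.
  move=> y; change (0 <= qf K2 y y).
  rewrite /K2 qfQB qfQZ qf_bbT.
  set be := (b^T *m y) 0 0.
  have := hq (- (c^-1 * be)) y; rewrite -/be.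
  set u := c^-1 * be.
  have hb : be = c * u by rewrite /u mulrA mulfV // mul1r.
  have -> : c^-1 * be ^+ 2 = u * be by rewrite /u expr2 mulrA.
  rewrite hb /c; nra.
have eK : 1%:M + K = block_mx c%:M b^T b (1%:M + D).
  rewrite -[K]submxK hul hur (scalar_mx_block 1 m 1) add_block_mx !add0r ?addr0.
  by rewrite /c raddfD.
have fac : block_mx c%:M b^T b (1%:M + D) =
    block_mx 1%:M 0 (c^-1 *: b) 1%:M *m block_mx c%:M b^T 0 (1%:M + K2).
  rewrite mulmx_block !mul1mx ?mul0mx ?mulmx0 ?mulmx1 ?addr0 ?add0r.
  apply: (@block_eq _ 1 m 1 m) => //.
    by rewrite mul_mx_scalar scalerA mulfV // scale1r.
  rewrite /K2 -scalemxAl; set Z := c^-1 *: _.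
  by rewrite addrCA [Z + _]addrC subrK.
have dK : \det (1%:M + K) = c * \det (1%:M + K2).
  by rewrite eK fac det_mulmx det_lblock det_ublock !det1 !mul1r det_scalar1.
have tK : \tr K = a + \tr D.
  rewrite -[K]submxK mxtrace_block hul mxtrace_scalar //.
have tK2 : \tr K2 = \tr D - c^-1 * \sum_i b i 0 ^+ 2.
  rewrite /K2 raddfB /= mxtraceZ mxtrace_mulC.
  by rewrite /mxtrace big_ord1 mxE; congr (_ - _ * _); apply: eq_bigr => i _; rewrite mxE expr2.
have sb : \sum_i b i 0 ^+ 2 <= a * \tr D.
  rewrite /mxtrace mulr_sumr; apply: ler_sum => i _.
  have l0 : lshift m (0 : 'I_1) = 0 by apply/val_inj.
  have := minor2 (rshift 1 i) (lshift m 0) hK.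
  by rewrite l0 /b /D !mxE l0 mulrC.
have h := IH K2 hK2.
rewrite dK tK.
have h2 : c * (1 + \tr K2) <= c * \det (1%:M + K2) by rewrite ler_pM2l.
rewrite tK2 mulrDr mulrBr mulrA mulfV // mul1r in h2.
move: h2 sb; rewrite /c; set t := \tr D; set s2 := \sum_i _; set d := \det _.
nra.
Qed.
End Det.


Section Tr.
Variable R : realType.

Lemma diag_qf p q (A : 'M[R]_(q, p)) (B : 'M[R]_p) i :
  (A *m B *m A^T) i i = qf B (row i A)^T (row i A)^T.
Proof.
rewrite /qf trmxK -row_mul !mxE; apply: eq_bigr => k _; rewrite !mxE.
congr (_ * _); by rewrite -row_mul mxE.
Qed.

Lemma trace_psd p (P Q : 'M[R]_p) : psd P -> psd Q -> 0 <= \tr (P *m Q).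
Proof.
move=> hP /gram [L ->].
rewrite mulmxA mxtrace_mulC mulmxA /mxtrace; apply: sumr_ge0 => i _.
by rewrite diag_qf; apply: psd_qf.
Qed.

Lemma psd1 p : psd (1%:M : 'M[R]_p).
Proof.
split; first exact: trmx1.
by move=> x; change (0 <= qf 1%:M x x); rewrite qf1; apply: sumr_ge0 => i _; rewrite -expr2 sqr_ge0.
Qed.

Lemma pd_psd p (P : 'M[R]_p) : pd P -> psd P.
Proof.
case=> sP hP; split => // x; case: (eqVneq x 0) => [->|xn0].
  by change (0 <= qf P 0 0); rewrite qf0l.
exact: ltW (hP x xn0).
Qed.

Lemma pd_unit p (P : 'M[R]_p) : pd P -> P \in unitmx.
Proof.
case=> sP hP; rewrite unitmxE unitfE; apply/negP => /det0P [v vn0 vP].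
have xn0 : v^T != 0 by apply: contra vn0 => /eqP h; rewrite -[v]trmxK h trmx0.
have := hP _ xn0; rewrite trmxK vP mul0mx mxE ltxx //.
Qed.

Lemma pd_lb p (P : 'M[R]_p) : pd P -> exists2 c, 0 < c & forall x, c * qf 1%:M x x <= qf P x x.
Proof.
move=> hP; have uP := pd_unit hP.
have [M eM] := gram (pd_psd hP).
have uM : M \in unitmx.
  by move: uP; rewrite eM !unitmxE det_mulmx det_tr unitrM andbb.
pose W := invmx M.
pose w := \sum_i \sum_j W i j ^+ 2.
have w0 : 0 <= w by apply: sumr_ge0 => i _; apply: sumr_ge0 => j _; exact: sqr_ge0.
exists (w + 1)^-1; first by rewrite invr_gt0; lra.
move=> x; pose y := M *m x.
have ex : x = W *m y by rewrite /y mulmxA mulVmx // mul1mx.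
have eq : qf P x x = qf 1%:M y y by rewrite eM -(mulmx1 M^T) qf_mul.
rewrite eq; rewrite ler_pdivrMl; last by lra.
have y0 : 0 <= qf 1%:M y y by apply: psd_qf; exact: psd1.
suff : qf 1%:M x x <= w * qf 1%:M y y by nra.
rewrite !qf1 /w mulr_suml; apply: ler_sum => i _.
have := CS (fun j => W i j) (fun j => y j 0).
rewrite ex mxE -expr2.
by congr (_ <= _ * _); apply: eq_bigr => j _; rewrite expr2.
Qed.

Lemma trace_lb p (P S : 'M[R]_p) c : psd S -> (forall x, c * qf 1%:M x x <= qf P x x) ->
  c * \tr S <= \tr (P *m S).
Proof.
move=> /gram [L ->] hc.
have e : \tr (P *m (L^T *m L)) = \tr (L *m P *m L^T) by rewrite mulmxA mxtrace_mulC mulmxA.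
rewrite e mxtrace_mulC -{1}(mulmx1 L).
rewrite /mxtrace mulr_sumr; apply: ler_sum => i _.
by rewrite !diag_qf.
Qed.

Lemma frob_le_tr p (S : 'M[R]_p) : psd S -> frob S <= \tr S.
Proof.
move=> hS.
have t0 : 0 <= \tr S by have := trace_psd (psd1 p) hS; rewrite mul1mx.
rewrite /frob -(ger0_norm t0) -sqrtr_sqr ler_sqrt; last exact: sqr_ge0.
rewrite /mxtrace expr2 mulr_suml; apply: ler_sum => i _.
rewrite mulr_sumr; apply: ler_sum => j _.
exact: minor2.
Qed.

End Tr.


Section Step.
Variable R : realType.

Lemma qf1_pos p (u : 'cV[R]_p) : u != 0 -> 0 < qf 1%:M u u.
Proof.
move=> un0; rewrite qf1 lt_def; apply/andP; split; last first.
  by apply: sumr_ge0 => i _; rewrite -expr2 sqr_ge0.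
apply: contra un0 => /eqP /psumr_eq0P h.
apply/eqP/matrixP => i j; rewrite (ord1 j) mxE.
have := h (fun k _ => ltac:(rewrite -expr2; exact: sqr_ge0)) i isT; rewrite -expr2.
by move/eqP; rewrite sqrf_eq0 => /eqP.
Qed.

Lemma scal_tr (X : 'M[R]_1) : X 0 0 = X^T 0 0.
Proof. by rewrite mxE. Qed.

Lemma step_psd p q (P A0 : 'M[R]_p) (B0 : 'M[R]_(p, q)) (R0 S : 'M[R]_q) e :
  0 < e -> psd P -> psd R0 -> S^T = S ->
  let K := 1%:M + S *m (e *: (R0 + B0^T *m P *m B0)) *m S in
  pd K /\
  psd (A0^T *m P *m A0 - e *: (A0^T *m P *m B0 *m S *m invmx K *m S *m B0^T *m P *m A0)).
Proof.
move=> e0 hP hR sS K.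
have [sP _] := hP; have [sR _] := hR.
have qK : forall u, qf K u u = qf 1%:M u u + e * (qf R0 (S *m u) (S *m u) + qf P (B0 *m (S *m u)) (B0 *m (S *m u))).
  move=> u; rewrite /K qfQD -{1}sS qf_mul qfQZ qfQD qf_mul.
  by [].
have sK : K^T = K.
  rewrite /K linearD /= trmx1 !trmx_mul sS linearZ /= linearD /= !trmx_mul trmxK sP sR.
  by rewrite !mulmxA.
have pK : pd K.
  split => // u un0; change (0 < qf K u u); rewrite qK.
  have := qf1_pos un0.
  have := psd_qf (S *m u) hR; have := psd_qf (B0 *m (S *m u)) hP.
  move=> h1 h2 h3; have : 0 <= e * (qf R0 (S *m u) (S *m u) + qf P (B0 *m (S *m u)) (B0 *m (S *m u))).
    by apply: mulr_ge0; lra.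
  lra.
split => //.
have uK := pd_unit pK.
pose G := S *m B0^T *m P *m A0.
have eX : A0^T *m P *m B0 *m S *m invmx K *m S *m B0^T *m P *m A0 = G^T *m invmx K *m G.
  by rewrite /G !trmx_mul trmxK sS sP !mulmxA.
rewrite eX; split.
  rewrite linearB /= linearZ /= !trmx_mul !trmxK sP trmx_inv sK.
  by rewrite !mulmxA.
move=> x; change (0 <= qf (A0^T *m P *m A0 - e *: (G^T *m invmx K *m G)) x x).
rewrite qfQB qfQZ !qf_mul.
set z := A0 *m x; set w := G *m x.
pose u := invmx K *m w.
have eKu : K *m u = w by rewrite /u mulKVmx.
set be := (w^T *m u) 0 0.
have h1 : qf (invmx K) w w = be by rewrite /be /u qf_mulA.
have h2 : qf K u u = be by rewrite qf_mulA eKu scal_tr trmx_mul trmxK.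
have h3 : qf P z (B0 *m (S *m u)) = be.
  rewrite /be /w /G /qf !trmx_mul !trmxK sS sP !mulmxA.
  by [].
pose r := z - e *: (B0 *m (S *m u)).
have hr : qf P r r = qf P z z - 2 * e * be + e ^+ 2 * qf P (B0 *m (S *m u)) (B0 *m (S *m u)).
  rewrite /r qfBl !qfBr !qfZl !qfZr h3 (qf_sym _ _ sP) h3; ring.
rewrite qK in h2.
have p1 := psd_qf r hP.
have p2 := psd_qf (S *m u) hR.
have p3 : 0 <= qf 1%:M u u by apply: psd_qf; exact: psd1.
rewrite h1.
move: hr h2 p1 p2 p3.
set a1 := qf P r r; set a2 := qf P z z; set a3 := qf P (B0 *m _) _; set a4 := qf R0 _ _; set a5 := qf 1%:M u u.
move=> hr h2 p1 p2 p3.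
have p4 : 0 <= e * a5 by apply: mulr_ge0 => //; lra.
have p5 : 0 <= e ^+ 2 * a4 by apply: mulr_ge0 => //; exact: sqr_ge0.
have : a2 - e * be = a1 + e * a5 + e ^+ 2 * a4.
  rewrite hr -h2; ring.
lra.
Qed.
End Step.


Section Ratio.
Variable R : realType.

Lemma sqrtm_sym p (M : 'M[R]_p) : (sqrtm M)^T = sqrtm M.
Proof.
rewrite /sqrtm; case: (pselect (exists S : 'M[R]_p, psd S /\ S *m S = M)) => [h|h].
  by have [[] + _] := xgetPex 0 h.
rewrite xgetPN ?trmx0 // => S hS; apply: h; by exists S.
Qed.

Lemma Pi_rev_psd (n m T : nat) (eps : R) A B Rk (F : 'M[R]_n) (Sig : nat -> 'M[R]_m) d :
  0 < eps -> (forall k, (k < T)%N -> pd (Rk k)) -> psd F -> (d <= T)%N ->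
  psd (Pi_rev T eps A B Rk F Sig d).
Proof.
move=> e0 hR hF; elim: d => [|d IH] hd //=.
have hd' : (d <= T)%N by apply: ltnW.
have hk : (T - d.+1 < T)%N by rewrite ltn_subrL; apply/andP; split => //; apply: leq_ltn_trans hd.
rewrite /Pi_step /Cmat.
have := @step_psd R n m (Pi_rev T eps A B Rk F Sig d) (A (T - d.+1)%N) (B (T - d.+1)%N)
  (Rk (T - d.+1)%N) (sqrtm (Sig (T - d.+1)%N)) eps^-1.
case => //.
- by rewrite invr_gt0.
- exact: IH.
- exact: pd_psd (hR _ hk).
- exact: sqrtm_sym.
Qed.

Lemma ratio_lb q p (Sg Rr : 'M[R]_q) (Bb : 'M[R]_(p, q)) (P : 'M[R]_p) e c :
  0 < e -> psd Sg -> pd Rr -> psd P -> 0 <= c ->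
  (forall x, c * qf 1%:M x x <= qf Rr x x) ->
  1 + e^-1 * c * frob Sg <=
  \det (Sg + e *: invmx (Rr + Bb^T *m P *m Bb)) / \det (e *: invmx (Rr + Bb^T *m P *m Bb)).
Proof.
move=> e0 hS hR hP c0 hc.
set N := Rr + Bb^T *m P *m Bb.
have [sR pR] := hR; have [sP _] := hP.
have hBP : psd (Bb^T *m P *m Bb).
  split; first by rewrite !trmx_mul trmxK sP mulmxA.
  by move=> x; change (0 <= qf (Bb^T *m P *m Bb) x x); rewrite qf_mul; exact: psd_qf.
have sN : N^T = N by rewrite /N linearD /= sR; have [-> _] := hBP.
have pN : pd N.
  split => // x xn0; change (0 < qf N x x); rewrite /N qfQD.
  have h1 : 0 < qf Rr x x := pR x xn0.
  have h2 := psd_qf x hBP; lra.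
have uN := pd_unit pN.
have en0 : e != 0 by rewrite gt_eqF.
have fac : Sg + e *: invmx N = (1%:M + e^-1 *: (Sg *m N)) *m (e *: invmx N).
  rewrite mulmxDl mul1mx -scalemxAl -scalemxAr scalerA mulVf // scale1r.
  by rewrite mulmxK // addrC.
have uQ : (e *: invmx N) \in unitmx by rewrite unitmxZ ?unitmx_inv // unitfE.
have dQ : \det (e *: invmx N) != 0 by rewrite -unitfE -unitmxE.
rewrite fac det_mulmx mulfK //.
have [L eL] := gram hS.
have eS : 1%:M + e^-1 *: (Sg *m N) = 1%:M + L^T *m (e^-1 *: (L *m N)).
  by rewrite eL -scalemxAr mulmxA.
rewrite eS sylvester -scalemxAl.
set K := e^-1 *: (L *m N *m L^T).
have hK : psd K.
  split.
    by rewrite /K linearZ /= !trmx_mul trmxK sN mulmxA.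
  move=> x; change (0 <= qf K x x); rewrite /K qfQZ.
  rewrite -[L in L *m N](trmxK L) qf_mul; apply: mulr_ge0; first by rewrite invr_ge0 ltW.
  exact: psd_qf (pd_psd pN).
apply: le_trans (det1D hK); rewrite lerD2l /K mxtraceZ -mulrA ler_wpM2l //; first by rewrite invr_ge0 ltW.
rewrite mxtrace_mulC mulmxA -eL mxtrace_mulC /N mulmxDl mxtraceD.
have t1 := trace_lb hS hc.
have t2 := trace_psd hBP hS.
have t3 := frob_le_tr hS.
have : c * frob Sg <= c * \tr Sg by rewrite ler_wpM2l.
lra.
Qed.

End Ratio.


Unset Implicit Arguments. Set Strict Implicit.

Theorem lemma4 (R : realType) (n m T : nat) (eps : R)
  (A : nat -> 'M[R]_n) (B : nat -> 'M[R]_(n, m)) (Rk : nat -> 'M[R]_m)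
  (Sw : nat -> 'M[R]_n) (F Sx : 'M[R]_n) :
  (0 < n)%N -> (0 < m)%N -> (0 < T)%N -> 0 < eps ->
  (forall k, (k < T)%N -> pd (Rk k)) ->
  (forall k, (k < T)%N -> pd (Sw k)) ->
  pd F -> pd Sx ->
  forall M : R, exists Bd : R,
    forall Sig : nat -> 'M[R]_m,
      (forall k, (k < T)%N -> psd (Sig k)) ->
      forall k, (k < T)%N -> Bd < frob (Sig k) ->
      M < Jcheck T eps A B Rk Sw F Sx Sig.
Proof.
move=> hn hm hT e0 hR hW hF hX M.
have hc : forall k, exists c : R, (k < T)%N -> 0 < c /\ forall x, c * qf 1%:M x x <= qf (Rk k) x x.
  move=> k; case: (ltnP k T) => hk.
    by have [c c0 hc] := pd_lb (hR k hk); exists c.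
  by exists 1.
have [cf hcf] := choice hc.
pose E := expR (2 * M / eps).
have E0 : 0 < E by apply: expR_gt0.
exists (\sum_(i < T) eps * E / cf i).
move=> Sig hS k hk hB.
have hP : forall j, psd (Pi T eps A B Rk F Sig j).
  by move=> j; apply: Pi_rev_psd => //; [exact: pd_psd | exact: leq_subr].
have hr : forall j, (j < T)%N ->
    1 + eps^-1 * cf j * frob (Sig j) <=
    \det (Sig j + SigQ T eps A B Rk F Sig j) / \det (SigQ T eps A B Rk F Sig j).
  move=> j hj; have [c0 hc0] := hcf j hj.
  by apply: ratio_lb => //; [exact: hS | exact: hR | exact: ltW].
have fr0 : forall j, 0 <= frob (Sig j) by move=> j; exact: sqrtr_ge0.
have hr1 : forall j, (j < T)%N ->
    1 <= \det (Sig j + SigQ T eps A B Rk F Sig j) / \det (SigQ T eps A B Rk F Sig j).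
  move=> j hj; apply: le_trans (hr j hj); rewrite lerDl.
  have [c0 _] := hcf j hj.
  by apply: mulr_ge0 => //; apply: mulr_ge0 => //; [rewrite invr_ge0 ltW | exact: ltW].
pose f (i : 'I_T) := eps * ln (\det (Sig i + SigQ T eps A B Rk F Sig i) / \det (SigQ T eps A B Rk F Sig i))
  + \tr (Pi T eps A B Rk F Sig i.+1 *m Sw i).
change (M < 2^-1 * (\tr (Pi T eps A B Rk F Sig 0 *m Sx) + \sum_(i < T) f i)).
have fge : forall i : 'I_T, 0 <= f i.
  move=> i; rewrite /f; apply: addr_ge0.
    by apply: mulr_ge0; [exact: ltW | apply: ln_ge0; exact: hr1].
  apply: trace_psd => //; exact: pd_psd (hW _ (ltn_ord i)).
have sumf : f (Ordinal hk) <= \sum_(i < T) f i.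
  rewrite (bigD1 (Ordinal hk)) //= lerDl.
  by apply: sumr_ge0 => i _.
have [c0 hc0] := hcf k hk.
have Bk : eps * E / cf k <= \sum_(i < T) eps * E / cf i.
  rewrite (bigD1 (Ordinal hk)) //= lerDl.
  apply: sumr_ge0 => i _; have [ci _] := hcf i (ltn_ord i).
  by apply: divr_ge0; [apply: mulr_ge0; exact: ltW | exact: ltW].
have h1 := lt_le_trans (le_lt_trans Bk hB) (lexx _).
rewrite ltr_pdivrMr // in h1.
have h2 : E < eps^-1 * cf k * frob (Sig k).
  have -> : eps^-1 * cf k * frob (Sig k) = (frob (Sig k) * cf k) / eps by field; rewrite gt_eqF.
  by rewrite ltr_pdivlMr // mulrC.
have lb := hr k hk.
set r := \det _ / \det _ in lb.
have r0 : 0 < r by apply: lt_le_trans lb; have := fr0 k; lra.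
have l1 : ln E < ln r.
  rewrite ltr_ln ?posrE //; apply: lt_le_trans lb; lra.
rewrite /E expRK ltr_pdivrMr // in l1.
have t0 : 0 <= \tr (Pi T eps A B Rk F Sig 0 *m Sx) by apply: trace_psd => //; exact: pd_psd.
have fk : eps * ln r <= f (Ordinal hk).
  rewrite /f /= lerDl; apply: trace_psd => //; exact: pd_psd (hW _ hk).
move: sumf fk t0 l1; set S := \sum_(i < T) f i; set t := \tr _.
move=> *; lra.
Qed.
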